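(* Fix $\sigma\in(0,\tfrac12)$. There exist $\lambda^{*}>0$ and $s^{*}\in(0,1)$ such that: (i) for all $\lambda\in(0,\lambda^{*})$, $\mathcal{I}^0_\lambda=(0,1)$; (ii) for $\lambda=\lambda^{*}$, $\mathcal{I}^0_\lambda=(0,1)\setminus\{s^{*}\}$; (iii) for all $\lambda>\lambda^{*}$ there exist $s_0,s_1\in(0,1)$ with $s_0<s^{*}<s_1$ such that $\mathcal{I}^0_\lambda=(0,s_0)\cup(s_1,1)$.
   Context: Let $g(s)=s^2(1-s)$ and $G(u)=u^3/3-u^4/4$ on $[0,1]$. For $\lambda>0$ and $s\in(0,1)$, let $(u_s,v_s)$ be the unique solution, on its maximal interval of existence, of $u'=v$, $v'=-\lambda g(u)$, $u(0)=s$, $v(0)=0$. Let $T_0(s)=T_0(s,\lambda)$ denote the time taken by $(u_s,v_s)$ to go from the point $(s,0)$ to the half-line $\{0\}\times(-\infty,0)$ moving forward along the level line $v^2+2\lambda G(u)=2\lambda G(s)$. Set $\mathcal{I}^0_\lambda=\{s\in(0,1): T_0(s)>\sigma\}$. *)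

(* Defs.v *)
From Stdlib Require Import Reals Lra.
Open Scope R_scope.

Definition g (s : R) : R := s ^ 2 * (1 - s).
Definition G (u : R) : R := u ^ 3 / 3 - u ^ 4 / 4.

(* IsT0 lam s t : t is the time T_0(s, lam) taken by the solution (u,v) of
   u' = v, v' = -lam g(u), u(0)=s, v(0)=0 to go from (s,0) to the half-line
   {0} x (-oo,0), i.e. the first positive time at which u = 0 (with v < 0).
   By uniqueness of solutions (g is locally Lipschitz) such t is unique. *)
Definition IsT0 (lam s t : R) : Prop :=
  0 < t /\
  exists u v : R -> R,
    (forall tau, 0 <= tau <= t ->
       derivable_pt_lim u tau (v tau) /\
       derivable_pt_lim v tau (- lam * g (u tau))) /\
    u 0 = s /\ v 0 = 0 /\
    (forall tau, 0 <= tau < t -> 0 < u tau) /\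
    u t = 0 /\ v t < 0.

Definition I0 (sigma lam s : R) : Prop :=
  0 < s < 1 /\ exists t, IsT0 lam s t /\ sigma < t.

(* Main.v *)
Require Import Defs.
From Stdlib Require Import Reals Lra Psatz ClassicalEpsilon.
From Coquelicot Require Import Coquelicot.
Open Scope R_scope.

Definition al (x : R) := (1 + x + x ^ 2) / 3.
Definition be (x : R) := (1 + x) * (1 + x ^ 2) / 4.
Definition W (s z : R) := s * al (1 - z ^ 2) - s ^ 2 * be (1 - z ^ 2).

Lemma W_ident s z : s ^ 2 * z ^ 2 * W s z = G s - G (s * (1 - z ^ 2)).
Proof. unfold W, al, be, G. field. Qed.

Lemma W_pos s z : 0 < s < 1 -> 0 < W s z.
Proof.
  intros Hs. unfold W, al, be.
  set (x := 1 - z ^ 2).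
  assert (Hx : x <= 1) by (unfold x; nra).
  assert (K : 0 < 4 * (1 + x + x ^ 2) - 3 * s * ((1 + x) * (1 + x ^ 2))).
  { destruct (Rle_lt_dec (-1) x) as [H1|H1].
    - assert (A : 0 <= (1 - x) * (3 * x ^ 2 + 2 * x + 1)).
      { apply Rmult_le_pos; nra. }
      assert (B : 0 <= (1 + x) * (1 + x ^ 2)) by (apply Rmult_le_pos; nra).
      destruct (Rle_lt_dec 1 x) as [H2|H2].
      + assert (x = 1) by lra. subst x. rewrite H. nra.
      + assert (A' : 0 < (1 - x) * (3 * x ^ 2 + 2 * x + 1)).
        { apply Rmult_lt_0_compat; nra. }
        nra.
    - assert (0 < - (1 + x) * (1 + x ^ 2)) by (apply Rmult_lt_0_compat; nra).
      nra. }
  nra.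
Qed.

Lemma al_le1 x : 0 <= x <= 1 -> al x <= 1.
Proof. unfold al. nra. Qed.
Lemma be_pos x : 0 <= x <= 1 -> 0 < be x.
Proof. unfold be. intros. apply Rmult_lt_0_compat; [|lra]. nra. Qed.
Definition hl (lam s z : R) := 2 / sqrt (2 * lam * W s z).

Lemma hl_der lam s z : 0 < lam -> 0 < s < 1 -> ex_derive (hl lam s) z.
Proof.
  intros Hl Hs. unfold hl, W, al, be. auto_derive.
  pose proof (W_pos s z Hs). unfold W, al, be in H.
  split; [nra|]. split; [|auto].
  intro E. apply sqrt_eq_0 in E; nra.
Qed.
Lemma hl_cont lam s z : 0 < lam -> 0 < s < 1 -> continuous (hl lam s) z.
Proof. intros. apply (ex_derive_continuous (hl lam s)). now apply hl_der. Qed.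

Lemma hl_pos lam s z : 0 < lam -> 0 < s < 1 -> 0 < hl lam s z.
Proof.
  intros. unfold hl. pose proof (W_pos s z H0).
  apply Rdiv_lt_0_compat; [lra|]. apply sqrt_lt_R0. nra.
Qed.

Definition H (lam s y : R) : R := RInt (hl lam s) 0 y.

Lemma hl_exRInt lam s a b : 0 < lam -> 0 < s < 1 -> ex_RInt (hl lam s) a b.
Proof. intros. apply (@ex_RInt_continuous R_CompleteNormedModule). intros. now apply hl_cont. Qed.

Lemma H_der lam s y : 0 < lam -> 0 < s < 1 ->
  derivable_pt_lim (H lam s) y (hl lam s y).
Proof.
  intros Hl Hs. apply is_derive_Reals. unfold H.
  apply is_derive_RInt with (a := 0).
  - apply filter_forall. intros b. apply (@RInt_correct R_CompleteNormedModule). now apply hl_exRInt.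
  - now apply hl_cont.
Qed.

Lemma H_cont lam s y : 0 < lam -> 0 < s < 1 -> continuity_pt (H lam s) y.
Proof.
  intros. apply derivable_continuous_pt. exists (hl lam s y). now apply H_der.
Qed.

Lemma H_incr lam s a b : 0 < lam -> 0 < s < 1 -> a < b -> H lam s a < H lam s b.
Proof.
  intros Hl Hs Hab.
  destruct (MVT_cor2 (H lam s) (hl lam s) a b Hab) as [c [E _]].
  - intros; now apply H_der.
  - pose proof (hl_pos lam s c Hl Hs). nra.
Qed.

Lemma H_inj lam s a b : 0 < lam -> 0 < s < 1 -> H lam s a = H lam s b -> a = b.
Proof.
  intros Hl Hs E. destruct (Rtotal_order a b) as [h|[h|h]]; auto.
  - pose proof (H_incr lam s a b Hl Hs h). lra.
  - pose proof (H_incr lam s b a Hl Hs h). lra.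
Qed.

Lemma H0 lam s : H lam s 0 = 0.
Proof. unfold H. apply (@RInt_point R_CompleteNormedModule). Qed.

Definition T (s : R) : R := H 1 s 1.

Lemma H1T lam s : 0 < lam -> 0 < s < 1 -> H lam s 1 = T s / sqrt lam.
Proof.
  intros Hl Hs. unfold T, H.
  assert (Hsl : 0 < sqrt lam) by now apply sqrt_lt_R0.
  rewrite (RInt_ext (hl lam s) (fun z => scal (/ sqrt lam) (hl 1 s z))).
  - rewrite (@RInt_scal R_CompleteNormedModule); [|apply hl_exRInt; lra].
    unfold scal; simpl; unfold mult; simpl. field. lra.
  - intros z _. unfold scal; simpl; unfold mult; simpl. unfold hl.
    pose proof (W_pos s z Hs).
    replace (2 * lam * W s z) with (lam * (2 * 1 * W s z)) by ring.
    rewrite sqrt_mult; try nra. field. split; [|lra].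
    apply Rgt_not_eq, sqrt_lt_R0. nra.
Qed.

Definition yinv (lam s tau : R) : R :=
  epsilon (inhabits 0) (fun y => H lam s y = tau).

Lemma yinv_spec lam s tau : 0 < lam -> 0 < s < 1 ->
  H lam s (-1) <= tau <= H lam s 2 ->
  H lam s (yinv lam s tau) = tau /\ -1 <= yinv lam s tau <= 2.
Proof.
  intros Hl Hs Ht.
  destruct (Ranalysis5.f_interv_is_interv (H lam s) (-1) 2 tau) as [x [Hx Ex]].
  - lra.
  - exact Ht.
  - intros; now apply H_cont.
  - assert (E : H lam s (yinv lam s tau) = tau).
    { unfold yinv. apply (epsilon_spec (inhabits 0) (fun y => H lam s y = tau)).
      now exists x. }
    split; auto.
    assert (E2 : H lam s (yinv lam s tau) = H lam s x) by (rewrite E; auto).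
    apply H_inj in E2; auto. rewrite E2. lra.
Qed.

Lemma yinv_H lam s y : 0 < lam -> 0 < s < 1 -> -1 <= y <= 2 ->
  yinv lam s (H lam s y) = y.
Proof.
  intros Hl Hs Hy.
  assert (R1 : H lam s (-1) <= H lam s y <= H lam s 2).
  { split; destruct (Req_dec y (-1)); destruct (Req_dec y 2); subst; try lra;
    apply Rlt_le, H_incr; lra. }
  destruct (yinv_spec lam s (H lam s y) Hl Hs R1) as [E _].
  apply H_inj in E; auto.
Qed.

Lemma yinv_der lam s tau : 0 < lam -> 0 < s < 1 ->
  H lam s (-1) < tau < H lam s 2 ->
  derivable_pt_lim (yinv lam s) tau (1 / hl lam s (yinv lam s tau)).
Proof.
  intros Hl Hs Ht.
  set (f := H lam s). set (g := yinv lam s).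
  assert (Prf : forall a, g (f (-1)) <= a <= g (f 2) -> derivable_pt f a).
  { intros a _. exists (hl lam s a). now apply H_der. }
  assert (Hcomp : forall x, f (-1) <= x <= f 2 -> comp f g x = id x).
  { intros x Hx. unfold comp, id. now apply yinv_spec. }
  assert (Prg : continuity_pt g tau).
  { apply (Ranalysis5.continuity_pt_recip_interv f g (-1) 2); try lra.
    - intros; apply H_incr; auto; lra.
    - intros; apply Hcomp; lra.
    - intros; apply yinv_spec; auto.
    - intros; now apply H_cont.
    - exact Ht. }
  assert (Hlu : f (-1) < f 2) by (apply Rlt_trans with tau; apply Ht).
  assert (Prg_incr : g (f (-1)) <= g tau <= g (f 2)).
  { unfold g, f. rewrite !yinv_H; try lra. apply yinv_spec; auto; lra. }
  pose proof (Ranalysis5.derivable_pt_lim_recip_interv f g (f (-1)) (f 2) tau Prf Prg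
      Hlu Ht Prg_incr Hcomp) as D.
  assert (E : derive_pt f (g tau) (Prf (g tau) Prg_incr) = hl lam s (g tau)).
  { apply derive_pt_eq_0. now apply H_der. }
  rewrite E in D. apply D. pose proof (hl_pos lam s (g tau) Hl Hs). lra.
Qed.
Lemma Phiv_der lam s y : 0 < lam -> 0 < s < 1 ->
  is_derive (fun y => - (s * y * sqrt (2 * lam * W s y))) y
    (- lam * g (s * (1 - y ^ 2)) * 2 / sqrt (2 * lam * W s y)).
Proof.
  intros Hl Hs. pose proof (W_pos s y Hs) as HW.
  unfold W, al, be in *. auto_derive.
  - nra.
  - set (r := sqrt _). 
    assert (Hr2 : r * r = 2 * lam * (s * ((1 + (1 - y ^ 2) + (1 - y ^ 2) ^ 2) / 3) -
             s ^ 2 * ((1 + (1 - y ^ 2)) * (1 + (1 - y ^ 2) ^ 2) / 4))).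
    { unfold r. apply sqrt_sqrt. nra. }
    assert (Hr : 0 < r). { unfold r. apply sqrt_lt_R0. nra. }
    unfold g. field_simplify; [|lra|lra]. 
    replace (r ^ 2) with (r * r) by ring. rewrite Hr2. field. lra.
Qed.

Lemma dpl_comp (f y : R -> R) x df dy L : is_derive f (y x) df ->
  derivable_pt_lim y x dy -> L = dy * df -> derivable_pt_lim (fun t => f (y t)) x L.
Proof.
  intros Hf Hy ->. apply is_derive_Reals. 
  apply (is_derive_comp f y x df dy); auto. now apply is_derive_Reals.
Qed.

Lemma Phiu_der s y : is_derive (fun y => s * (1 - y ^ 2)) y (- (2 * s * y)).
Proof. auto_derive; auto. ring. Qed.

Lemma sol_exists lam s : 0 < lam -> 0 < s < 1 -> IsT0 lam s (H lam s 1).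
Proof.
  intros Hl Hs.
  set (t := H lam s 1).
  assert (Hm1 : H lam s (-1) < 0) by (rewrite <- (H0 lam s); apply H_incr; auto; lra).
  assert (Ht0 : 0 < t) by (unfold t; rewrite <- (H0 lam s); apply H_incr; auto; lra).
  assert (Ht2 : t < H lam s 2) by (unfold t; apply H_incr; auto; lra).
  set (y := yinv lam s).
  assert (Yr : forall tau, 0 <= tau <= t -> 0 <= y tau <= 1 /\ (tau < t -> y tau < 1)).
  { intros tau Htau.
    destruct (yinv_spec lam s tau Hl Hs) as [E Hy]; [lra|].
    fold y in E, Hy.
    split; [split|].
    - destruct (Rle_lt_dec 0 (y tau)) as [h|h]; auto.
      pose proof (H_incr lam s _ _ Hl Hs h) as HH. rewrite H0 in HH. lra.
    - destruct (Rle_lt_dec (y tau) 1) as [h|h]; auto.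
      pose proof (H_incr lam s _ _ Hl Hs h) as HH. fold t in HH. lra.
    - intros Hlt. destruct (Rle_lt_dec 1 (y tau)) as [h|h]; auto.
      destruct (Req_dec (y tau) 1) as [e|e].
      + rewrite e in E. fold t in E. lra.
      + assert (h1 : 1 < y tau) by lra.
        pose proof (H_incr lam s _ _ Hl Hs h1) as HH. fold t in HH. lra. }
  assert (Yd : forall tau, 0 <= tau <= t ->
             derivable_pt_lim y tau (sqrt (2 * lam * W s (y tau)) / 2)).
  { intros tau Htau. 
    replace (sqrt (2 * lam * W s (y tau)) / 2) with (1 / hl lam s (y tau)).
    - apply yinv_der; auto; lra.
    - unfold hl. pose proof (W_pos s (y tau) Hs).
      assert (0 < sqrt (2 * lam * W s (y tau))) by (apply sqrt_lt_R0; nra).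
      field. lra. }
  assert (Y0 : y 0 = 0).
  { unfold y. pose proof (yinv_H lam s 0 Hl Hs) as e. rewrite H0 in e. apply e; lra. }
  assert (Yt : y t = 1).
  { unfold y, t. apply yinv_H; auto; lra. }
  split; [exact Ht0|].
  exists (fun tau => s * (1 - y tau ^ 2)).
  exists (fun tau => - (s * y tau * sqrt (2 * lam * W s (y tau)))).
  split; [|split; [|split; [|split; [|split]]]].
  - intros tau Htau. 
    pose proof (W_pos s (y tau) Hs).
    assert (0 < sqrt (2 * lam * W s (y tau))) by (apply sqrt_lt_R0; nra).
    split.
    + eapply (dpl_comp (fun y => s * (1 - y ^ 2)) y tau); [apply Phiu_der | apply Yd; auto |]. field.
    + eapply (dpl_comp (fun y => - (s * y * sqrt (2 * lam * W s y))) y tau); [apply Phiv_der; auto | apply Yd; auto |]. field. lra.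
  - simpl. rewrite Y0. ring.
  - simpl. rewrite Y0. ring.
  - intros tau Htau. destruct (Yr tau) as [[A B] C]; [lra|].
    specialize (C (proj2 Htau)). simpl. 
    assert (y tau ^ 2 < 1) by nra. nra.
  - simpl. rewrite Yt. ring.
  - simpl. rewrite Yt. pose proof (W_pos s 1 Hs).
    assert (0 < sqrt (2 * lam * W s 1)) by (apply sqrt_lt_R0; nra). nra.
Qed.

Lemma const_on (f : R -> R) a b : a < b ->
  (forall x, a <= x <= b -> continuity_pt f x) ->
  (forall x, a < x < b -> derivable_pt_lim f x 0) -> f b = f a.
Proof.
  intros Hab Hc Hd.
  assert (pr1 : forall c, a < c < b -> derivable_pt f c).
  { intros c Hc'. exists 0. now apply Hd. }
  assert (pr2 : forall c, a < c < b -> derivable_pt id c).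
  { intros c _. apply derivable_pt_id. }
  destruct (MVT f id a b pr1 pr2 Hab Hc) as [c [P E]].
  { intros; apply derivable_continuous_pt, derivable_pt_id. }
  rewrite (derive_pt_eq_0 f c 0 (pr1 c P) (Hd c P)) in E.
  rewrite (derive_pt_eq_0 id c 1 (pr2 c P) (derivable_pt_lim_id c)) in E.
  unfold id in E. lra.
Qed.

Lemma G_der x : derivable_pt_lim G x (g x).
Proof. apply is_derive_Reals. unfold G, g. auto_derive; auto. field. Qed.

Lemma G_incr a b : 0 <= a -> a < b -> b <= 1 -> G a < G b.
Proof.
  intros Ha Hab Hb.
  destruct (MVT_cor2 G g a b Hab) as [c [E Hc]].
  - intros; apply G_der.
  - assert (0 < g c) by (unfold g; apply Rmult_lt_0_compat; nra). nra.
Qed.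

Lemma energy_der lam u v c du dv :
  derivable_pt_lim u c du -> derivable_pt_lim v c dv ->
  derivable_pt_lim (fun tau => v tau ^ 2 + 2 * lam * G (u tau)) c
    (2 * v c * dv + 2 * lam * (du * g (u c))).
Proof.
  intros Hu Hv. apply is_derive_Reals.
  apply is_derive_Reals in Hu. apply is_derive_Reals in Hv.
  apply (is_derive_plus (fun tau => v tau ^ 2) (fun tau => 2 * lam * G (u tau))).
  - replace (2 * v c * dv) with (INR 2 * dv * v c ^ Nat.pred 2) by
      (simpl; ring).
    apply (is_derive_pow v 2 c dv Hv).
  - apply (is_derive_scal (fun tau => G (u tau))).
    apply (is_derive_comp G u c). 2: exact Hu.
    apply is_derive_Reals, G_der.
Qed.

Lemma slope1_on (f : R -> R) a b : a < b ->
  (forall x, a <= x <= b -> continuity_pt f x) ->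
  (forall x, a < x < b -> derivable_pt_lim f x 1) -> f b - f a = b - a.
Proof.
  intros Hab Hc Hd.
  assert (pr1 : forall c, a < c < b -> derivable_pt f c).
  { intros c Hc'. exists 1. now apply Hd. }
  assert (pr2 : forall c, a < c < b -> derivable_pt id c).
  { intros c _. apply derivable_pt_id. }
  destruct (MVT f id a b pr1 pr2 Hab Hc) as [c [P E]].
  { intros; apply derivable_continuous_pt, derivable_pt_id. }
  rewrite (derive_pt_eq_0 f c 1 (pr1 c P) (Hd c P)) in E.
  rewrite (derive_pt_eq_0 id c 1 (pr2 c P) (derivable_pt_lim_id c)) in E.
  unfold id in E. lra.
Qed.

Lemma sol_time lam s t : 0 < lam -> 0 < s < 1 -> IsT0 lam s t -> t = H lam s 1.
Proof.
  intros Hl Hs [Ht [u [v [Hd [U0 [V0 [Upos [Ut Vt]]]]]]]].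
  assert (cu : forall tau, 0 <= tau <= t -> continuity_pt u tau).
  { intros tau Htau. apply derivable_continuous_pt. exists (v tau). apply Hd; auto. }
  assert (cv : forall tau, 0 <= tau <= t -> continuity_pt v tau).
  { intros tau Htau. apply derivable_continuous_pt. exists (- lam * g (u tau)). apply Hd; auto. }
  assert (En : forall tau, 0 <= tau <= t -> v tau ^ 2 + 2 * lam * G (u tau) = 2 * lam * G s).
  { intros tau Htau. destruct (Req_dec tau 0) as [e|e].
    - rewrite e, U0, V0. ring.
    - destruct (MVT_cor2 (fun tau => v tau ^ 2 + 2 * lam * G (u tau))
        (fun c => 2 * v c * (- lam * g (u c)) + 2 * lam * (v c * g (u c))) 0 tau)
        as [c [E _]].
      + lra.
      + intros c Hc. apply energy_der; apply Hd; lra.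
      + simpl in E. rewrite U0, V0 in E. 
        replace (2 * v c * (- lam * g (u c)) + 2 * lam * (v c * g (u c))) with 0 in E by ring.
        lra. }
  assert (Ule : forall tau, 0 <= tau <= t -> u tau <= s).
  { intros tau Htau. destruct (Rle_lt_dec (u tau) s) as [h|h]; auto. exfalso.
    assert (tau <> 0) by (intro e; rewrite e, U0 in h; lra).
    set (w := s + (Rmin (u tau) 1 - s) / 2).
    assert (Hw : s < w < Rmin (u tau) 1).
    { unfold w. assert (s < Rmin (u tau) 1) by (apply Rmin_glb_lt; lra). lra. }
    assert (Hw1 : w <= 1) by (pose proof (Rmin_r (u tau) 1); lra).
    assert (Hw2 : w <= u tau) by (pose proof (Rmin_l (u tau) 1); lra).
    destruct (Ranalysis5.f_interv_is_interv u 0 tau w) as [x [Hx Ex]].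
    - lra.
    - rewrite U0. lra.
    - intros; apply cu; lra.
    - pose proof (En x ltac:(lra)) as Ex2. rewrite Ex in Ex2.
      pose proof (G_incr s w ltac:(lra) ltac:(lra) Hw1).
      pose proof (pow2_ge_0 (v x)). nra. }
  assert (gpos : forall tau, 0 <= tau < t -> 0 < g (u tau)).
  { intros tau Htau. pose proof (Upos tau Htau). pose proof (Ule tau ltac:(lra)).
    unfold g. apply Rmult_lt_0_compat; nra. }
  assert (Vneg : forall tau, 0 < tau <= t -> v tau < 0).
  { intros tau Htau.
    destruct (MVT_cor2 v (fun c => - lam * g (u c)) 0 tau) as [c [E Hc]].
    - lra.
    - intros c Hc. apply Hd. lra.
    - rewrite V0 in E. pose proof (gpos c ltac:(lra)) as gp.
      assert (0 < lam * g (u c) * tau) by (apply Rmult_lt_0_compat; [apply Rmult_lt_0_compat|]; lra).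
      lra. }
  assert (Ult : forall tau, 0 < tau <= t -> u tau < s).
  { intros tau Htau. destruct (Req_dec (u tau) s) as [e|e].
    - pose proof (En tau ltac:(lra)) as Ex2. rewrite e in Ex2.
      pose proof (Vneg tau Htau). nra.
    - pose proof (Ule tau ltac:(lra)). lra. }
  set (w := fun tau => 1 - u tau / s).
  assert (wd : forall tau, 0 <= tau <= t -> derivable_pt_lim w tau (v tau * (- / s))).
  { intros tau Htau. apply (dpl_comp (fun x => 1 - x / s) u tau (- / s) (v tau)).
    - auto_derive; auto. field. lra.
    - apply Hd; auto.
    - ring. }
  assert (wnn : forall tau, 0 <= tau <= t -> 0 <= w tau).
  { intros tau Htau. unfold w. pose proof (Ule tau Htau).
    assert (u tau / s <= 1).
    { apply Rmult_le_reg_r with s; [lra|]. unfold Rdiv.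
      rewrite Rmult_assoc, Rinv_l, Rmult_1_r; lra. }
    lra. }
  assert (wpos : forall tau, 0 < tau <= t -> 0 < w tau).
  { intros tau Htau. unfold w. pose proof (Ult tau Htau).
    assert (u tau / s < 1).
    { apply Rmult_lt_reg_r with s; [lra|]. unfold Rdiv.
      rewrite Rmult_assoc, Rinv_l, Rmult_1_r; lra. }
    lra. }
  set (Y := fun tau => sqrt (w tau)).
  set (f := fun tau => H lam s (Y tau)).
  assert (fc : forall tau, 0 <= tau <= t -> continuity_pt f tau).
  { intros tau Htau. unfold f.
    apply (continuity_pt_comp Y (H lam s)); [|apply H_cont; auto].
    unfold Y. apply (continuity_pt_comp w sqrt).
    - apply derivable_continuous_pt. exists (v tau * (- / s)). now apply wd.
    - apply continuity_pt_sqrt. now apply wnn. }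
  assert (fd : forall tau, 0 < tau < t -> derivable_pt_lim f tau 1).
  { intros tau Htau. pose proof (wpos tau ltac:(lra)) as wp.
    assert (Yd : derivable_pt_lim Y tau (v tau * (- / s) * / (2 * sqrt (w tau)))).
    { apply (dpl_comp sqrt w tau (/ (2 * sqrt (w tau))) (v tau * (- / s))).
      - apply is_derive_Reals. apply derivable_pt_lim_sqrt. auto.
      - apply wd. lra.
      - ring. }
    apply (dpl_comp (H lam s) Y tau (hl lam s (Y tau)) (v tau * - / s * / (2 * sqrt (w tau)))).
    - apply is_derive_Reals, H_der; auto.
    - exact Yd.
    -
      set (yy := Y tau).
      assert (Hyy : 0 < yy) by (unfold yy, Y; apply sqrt_lt_R0; auto).
      assert (Hy2 : yy * yy = w tau) by (unfold yy, Y; apply sqrt_sqrt; lra).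
      pose proof (W_pos s yy Hs) as HW.
      set (r := sqrt (2 * lam * W s yy)).
      assert (Hr : 0 < r) by (unfold r; apply sqrt_lt_R0; nra).
      assert (Hr2 : r * r = 2 * lam * W s yy) by (unfold r; apply sqrt_sqrt; nra).
      pose proof (W_ident s yy) as WI.
      assert (Eu : s * (1 - yy ^ 2) = u tau) by (unfold w in Hy2; simpl; rewrite Rmult_1_r, Hy2; field; lra).
      rewrite Eu in WI.
      pose proof (En tau ltac:(lra)) as Et.
      assert (Ev2 : v tau ^ 2 = (s * yy * r) ^ 2).
      { replace ((s * yy * r) ^ 2) with (s ^ 2 * yy ^ 2 * (r * r)) by ring.
        rewrite Hr2. nra. }
      pose proof (Vneg tau ltac:(lra)) as Vn.
      assert (0 < s * yy * r) by (apply Rmult_lt_0_compat; [nra|auto]).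
      assert (Ev : v tau = - (s * yy * r)) by nra.
      fold yy. unfold hl. fold r. rewrite Ev.
      change (sqrt (w tau)) with yy. field. lra. }
  pose proof (slope1_on f 0 t Ht fc fd) as S.
  unfold f, Y, w in S. rewrite Ut, U0 in S.
  replace (1 - s / s) with 0 in S by (field; lra).
  replace (1 - 0 / s) with 1 in S by (field; lra).
  rewrite sqrt_0, sqrt_1, H0 in S. lra.
Qed.

Lemma I0_iff sigma lam s : 0 < lam ->
  (I0 sigma lam s <-> 0 < s < 1 /\ sigma * sqrt lam < T s).
Proof.
  intros Hl. assert (Hq : 0 < sqrt lam) by (apply sqrt_lt_R0; auto).
  split.
  - intros [Hs [t [Ht Hst]]]. split; auto.
    apply sol_time in Ht; auto. rewrite H1T in Ht; auto. subst t.
    apply (Rmult_lt_compat_r (sqrt lam)) in Hst; auto.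
    replace (T s / sqrt lam * sqrt lam) with (T s) in Hst by (field; lra). lra.
  - intros [Hs Hlt]. split; auto. exists (H lam s 1). split.
    + now apply sol_exists.
    + rewrite H1T; auto. apply (Rmult_lt_reg_r (sqrt lam)); auto.
      replace (T s / sqrt lam * sqrt lam) with (T s) by (field; lra). lra.
Qed.

Lemma tangent_isqrt A m : 0 < A -> 0 < m ->
  1 / m - (A ^ 2 - m ^ 2) / (2 * m ^ 3) <= 1 / A.
Proof.
  intros HA Hm.
  assert (E : 1 / A - (1 / m - (A ^ 2 - m ^ 2) / (2 * m ^ 3)) =
              (A - m) ^ 2 * (A + 2 * m) / (2 * A * m ^ 3)) by (field; lra).
  assert (0 <= (A - m) ^ 2 * (A + 2 * m) / (2 * A * m ^ 3)).
  { apply Rle_mult_inv_pos. apply Rmult_le_pos; [apply pow2_ge_0|lra].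
    apply Rmult_lt_0_compat; [lra|]. apply pow_lt; auto. }
  lra.
Qed.

Lemma isqrt_convex p q mu : 0 < p -> 0 < q -> 0 <= mu <= 1 ->
  1 / sqrt (mu * p + (1 - mu) * q) <= mu * (1 / sqrt p) + (1 - mu) * (1 / sqrt q).
Proof.
  intros Hp Hq Hmu.
  assert (Hpq : 0 < mu * p + (1 - mu) * q) by nra.
  set (A := sqrt p). set (B := sqrt q). set (m := sqrt (mu * p + (1 - mu) * q)).
  assert (HA : 0 < A) by (apply sqrt_lt_R0; auto).
  assert (HB : 0 < B) by (apply sqrt_lt_R0; auto).
  assert (Hm : 0 < m) by (apply sqrt_lt_R0; auto).
  assert (A2 : A ^ 2 = p) by (unfold A; simpl; rewrite Rmult_1_r; apply sqrt_sqrt; lra).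
  assert (B2 : B ^ 2 = q) by (unfold B; simpl; rewrite Rmult_1_r; apply sqrt_sqrt; lra).
  assert (m2 : m ^ 2 = mu * p + (1 - mu) * q) by (unfold m; simpl; rewrite Rmult_1_r; apply sqrt_sqrt; lra).
  pose proof (tangent_isqrt A m HA Hm) as TA.
  pose proof (tangent_isqrt B m HB Hm) as TB.
  assert (E : mu * (1 / m - (A ^ 2 - m ^ 2) / (2 * m ^ 3)) +
              (1 - mu) * (1 / m - (B ^ 2 - m ^ 2) / (2 * m ^ 3)) = 1 / m).
  { rewrite A2, B2, m2. field. lra. }
  assert (mu * (1 / m - (A ^ 2 - m ^ 2) / (2 * m ^ 3)) <= mu * (1 / A))
    by (apply Rmult_le_compat_l; lra).
  assert ((1 - mu) * (1 / m - (B ^ 2 - m ^ 2) / (2 * m ^ 3)) <= (1 - mu) * (1 / B))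
    by (apply Rmult_le_compat_l; lra).
  lra.
Qed.

Lemma isqrt_decr p q : 0 < p -> p <= q -> 1 / sqrt q <= 1 / sqrt p.
Proof.
  intros Hp Hpq. apply Rmult_le_reg_r with (sqrt p * sqrt q).
  - apply Rmult_lt_0_compat; apply sqrt_lt_R0; lra.
  - assert (0 < sqrt p) by (apply sqrt_lt_R0; lra).
    assert (0 < sqrt q) by (apply sqrt_lt_R0; lra).
    replace (1 / sqrt q * (sqrt p * sqrt q)) with (sqrt p) by (field; lra).
    replace (1 / sqrt p * (sqrt p * sqrt q)) with (sqrt q) by (field; lra).
    apply sqrt_le_1_alt. auto.
Qed.

Lemma isqrt_sdecr p q : 0 < p -> p < q -> 1 / sqrt q < 1 / sqrt p.
Proof.
  intros Hp Hpq. apply Rmult_lt_reg_r with (sqrt p * sqrt q).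
  - apply Rmult_lt_0_compat; apply sqrt_lt_R0; lra.
  - assert (0 < sqrt p) by (apply sqrt_lt_R0; lra).
    assert (0 < sqrt q) by (apply sqrt_lt_R0; lra).
    replace (1 / sqrt q * (sqrt p * sqrt q)) with (sqrt p) by (field; lra).
    replace (1 / sqrt p * (sqrt p * sqrt q)) with (sqrt q) by (field; lra).
    apply sqrt_lt_1_alt. lra.
Qed.

Lemma mix_in a b mu : 0 < a < 1 -> 0 < b < 1 -> 0 <= mu <= 1 ->
  0 < mu * a + (1 - mu) * b < 1.
Proof.
  intros Ha Hb Hm.
  replace (mu * a + (1 - mu) * b) with (b + mu * (a - b)) by ring.
  destruct (Rle_dec b a).
  - assert (0 <= mu * (a - b)) by (apply Rmult_le_pos; lra).
    assert (mu * (a - b) <= 1 * (a - b)) by (apply Rmult_le_compat_r; lra). lra.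
  - assert (0 <= mu * (b - a)) by (apply Rmult_le_pos; lra).
    assert (mu * (b - a) <= 1 * (b - a)) by (apply Rmult_le_compat_r; lra). lra.
Qed.

Lemma W_mix a b mu z : W (mu * a + (1 - mu) * b) z =
  mu * W a z + (1 - mu) * W b z + mu * (1 - mu) * (a - b) ^ 2 * be (1 - z ^ 2).
Proof. unfold W. ring. Qed.

Lemma k_convex a b mu z : 0 < a < 1 -> 0 < b < 1 -> 0 <= mu <= 1 -> 0 <= z <= 1 ->
  hl 1 (mu * a + (1 - mu) * b) z <= mu * hl 1 a z + (1 - mu) * hl 1 b z.
Proof.
  intros Ha Hb Hmu Hz. unfold hl.
  assert (Hm : 0 < mu * a + (1 - mu) * b < 1) by (apply mix_in; lra).
  pose proof (W_pos a z Ha). pose proof (W_pos b z Hb).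
  pose proof (W_pos _ z Hm).
  assert (Hbe : 0 < be (1 - z ^ 2)).
  { apply be_pos. assert (0 <= z ^ 2 <= 1) by (simpl; rewrite Rmult_1_r; split; [apply Rle_0_sqr|]; nra). lra. }
  assert (Hcomb : 0 < mu * W a z + (1 - mu) * W b z).
  { replace (mu * W a z + (1 - mu) * W b z) with (W b z + mu * (W a z - W b z)) by ring.
    destruct (Rle_dec (W b z) (W a z)).
    - assert (0 <= mu * (W a z - W b z)) by (apply Rmult_le_pos; lra). lra.
    - assert (mu * (W b z - W a z) <= 1 * (W b z - W a z)) by (apply Rmult_le_compat_r; lra). lra. }
  assert (L1 : 1 / sqrt (2 * 1 * W (mu * a + (1 - mu) * b) z) <=
     1 / sqrt (2 * 1 * (mu * W a z + (1 - mu) * W b z))).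
  { apply isqrt_decr; [lra|]. rewrite W_mix.
    assert (0 <= mu * (1 - mu) * (a - b) ^ 2 * be (1 - z ^ 2)).
    { apply Rmult_le_pos; [|lra]. apply Rmult_le_pos; [nra|apply pow2_ge_0]. }
    lra. }
  pose proof (isqrt_convex (2 * 1 * W a z) (2 * 1 * W b z) mu ltac:(lra) ltac:(lra) Hmu) as C.
  replace (mu * (2 * 1 * W a z) + (1 - mu) * (2 * 1 * W b z)) with
     (2 * 1 * (mu * W a z + (1 - mu) * W b z)) in C by ring.
  unfold Rdiv in *. lra.
Qed.

Lemma k_sconvex a b mu z : 0 < a < 1 -> 0 < b < 1 -> a <> b -> 0 < mu < 1 -> 0 <= z <= 1 ->
  hl 1 (mu * a + (1 - mu) * b) z < mu * hl 1 a z + (1 - mu) * hl 1 b z.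
Proof.
  intros Ha Hb Hab Hmu Hz. unfold hl.
  assert (Hm : 0 < mu * a + (1 - mu) * b < 1) by (apply mix_in; lra).
  pose proof (W_pos a z Ha). pose proof (W_pos b z Hb).
  pose proof (W_pos _ z Hm).
  assert (Hbe : 0 < be (1 - z ^ 2)).
  { apply be_pos. assert (0 <= z ^ 2 <= 1) by (simpl; rewrite Rmult_1_r; split; [apply Rle_0_sqr|]; nra). lra. }
  assert (Hcomb : 0 < mu * W a z + (1 - mu) * W b z).
  { replace (mu * W a z + (1 - mu) * W b z) with (W b z + mu * (W a z - W b z)) by ring.
    destruct (Rle_dec (W b z) (W a z)).
    - assert (0 <= mu * (W a z - W b z)) by (apply Rmult_le_pos; lra). lra.
    - assert (mu * (W b z - W a z) <= 1 * (W b z - W a z)) by (apply Rmult_le_compat_r; lra). lra. }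
  assert (L1 : 1 / sqrt (2 * 1 * W (mu * a + (1 - mu) * b) z) <
     1 / sqrt (2 * 1 * (mu * W a z + (1 - mu) * W b z))).
  { apply isqrt_sdecr; [lra|]. rewrite W_mix.
    assert (0 < mu * (1 - mu) * (a - b) ^ 2 * be (1 - z ^ 2)).
    { apply Rmult_lt_0_compat; [|lra]. apply Rmult_lt_0_compat; [nra|].
      simpl. rewrite Rmult_1_r. apply (Rsqr_pos_lt (a - b)). lra. }
    lra. }
  pose proof (isqrt_convex (2 * 1 * W a z) (2 * 1 * W b z) mu ltac:(lra) ltac:(lra) ltac:(lra)) as C.
  replace (mu * (2 * 1 * W a z) + (1 - mu) * (2 * 1 * W b z)) with
     (2 * 1 * (mu * W a z + (1 - mu) * W b z)) in C by ring.
  unfold Rdiv in *. lra.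
Qed.

Lemma comb_cont a b mu z : 0 < a < 1 -> 0 < b < 1 ->
  continuous (fun z => mu * hl 1 a z + (1 - mu) * hl 1 b z) z.
Proof.
  intros Ha Hb.
  apply (continuous_plus (fun z => mu * hl 1 a z) (fun z => (1 - mu) * hl 1 b z)).
  - apply (continuous_mult (fun _ => mu) (hl 1 a)). apply continuous_const.
    apply hl_cont; lra.
  - apply (continuous_mult (fun _ => 1 - mu) (hl 1 b)). apply continuous_const.
    apply hl_cont; lra.
Qed.

Lemma T_lin a b mu : 0 < a < 1 -> 0 < b < 1 ->
  RInt (fun z => mu * hl 1 a z + (1 - mu) * hl 1 b z) 0 1 = mu * T a + (1 - mu) * T b.
Proof.
  intros Ha Hb. unfold T, H.
  rewrite (@RInt_plus R_CompleteNormedModule (fun z => mu * hl 1 a z) (fun z => (1 - mu) * hl 1 b z)).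
  - assert (E1 : RInt (fun z => mu * hl 1 a z) 0 1 = mu * RInt (hl 1 a) 0 1)
      by exact (@RInt_scal R_CompleteNormedModule (hl 1 a) 0 1 mu (hl_exRInt 1 a 0 1 ltac:(lra) Ha)).
    assert (E2 : RInt (fun z => (1 - mu) * hl 1 b z) 0 1 = (1 - mu) * RInt (hl 1 b) 0 1)
      by exact (@RInt_scal R_CompleteNormedModule (hl 1 b) 0 1 (1 - mu) (hl_exRInt 1 b 0 1 ltac:(lra) Hb)).
    change (plus ?x ?y) with (x + y). rewrite E1, E2. reflexivity.
  - apply (@ex_RInt_scal R_CompleteNormedModule). apply hl_exRInt; lra.
  - apply (@ex_RInt_scal R_CompleteNormedModule). apply hl_exRInt; lra.
Qed.

Lemma T_convex a b mu : 0 < a < 1 -> 0 < b < 1 -> 0 <= mu <= 1 ->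
  T (mu * a + (1 - mu) * b) <= mu * T a + (1 - mu) * T b.
Proof.
  intros Ha Hb Hm. rewrite <- T_lin; auto.
  pose proof (mix_in a b mu Ha Hb Hm) as Hmx.
  unfold T, H. apply RInt_le.
  - lra.
  - apply hl_exRInt; lra.
  - apply (@ex_RInt_continuous R_CompleteNormedModule). intros; apply comb_cont; auto.
  - intros z Hz. apply k_convex; auto; lra.
Qed.

Lemma T_sconvex a b mu : 0 < a < 1 -> 0 < b < 1 -> a <> b -> 0 < mu < 1 ->
  T (mu * a + (1 - mu) * b) < mu * T a + (1 - mu) * T b.
Proof.
  intros Ha Hb Hab Hm. rewrite <- T_lin; auto.
  pose proof (mix_in a b mu Ha Hb ltac:(lra)) as Hmx.
  unfold T, H. apply RInt_lt.
  - lra.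
  - intros; apply comb_cont; auto.
  - intros; apply hl_cont; lra.
  - intros z Hz. apply k_sconvex; auto; lra.
Qed.

Definition convex_on (f : R -> R) (l r : R) := forall a b mu, l < a < r -> l < b < r ->
  0 <= mu <= 1 -> f (mu * a + (1 - mu) * b) <= mu * f a + (1 - mu) * f b.

Lemma neg_abs z : - Rabs z <= z.
Proof. pose proof (Rle_abs (- z)) as h. rewrite Rabs_Ropp in h. lra. Qed.

Lemma convex_right f l r x : convex_on f l r -> l < x < r ->
  forall eps, 0 < eps -> exists del, 0 < del /\
    forall y, x <= y < x + del -> Rabs (f y - f x) < eps.
Proof.
  intros Cf Hx eps He.
  set (d := Rmin (x - l) (r - x) / 2).
  assert (Hd : 0 < d) by (unfold d; pose proof (Rmin_glb_lt (x - l) (r - x) 0 ltac:(lra) ltac:(lra)); lra).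
  assert (Hd1 : d <= (x - l) / 2) by (unfold d; pose proof (Rmin_l (x - l) (r - x)); lra).
  assert (Hd2 : d <= (r - x) / 2) by (unfold d; pose proof (Rmin_r (x - l) (r - x)); lra).
  set (a := x - d). set (b := x + d).
  set (K := Rabs (f a - f x) + Rabs (f b - f x)).
  assert (HK : 0 <= K) by (unfold K; pose proof (Rabs_pos (f a - f x)); pose proof (Rabs_pos (f b - f x)); lra).
  exists (Rmin d (eps * d / (K + 1))). split.
  { apply Rmin_glb_lt; auto. apply Rdiv_lt_0_compat; [nra|lra]. }
  intros y Hy.
  assert (Hy1 : y - x < d) by (pose proof (Rmin_l d (eps * d / (K + 1))); lra).
  assert (Hy2 : y - x < eps * d / (K + 1)) by (pose proof (Rmin_r d (eps * d / (K + 1))); lra).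
  assert (I1 : d * (f y - f x) <= (y - x) * (f b - f x)).
  { set (mu := (y - x) / d).
    assert (Hmu : 0 <= mu <= 1).
    { unfold mu. split; [apply Rdiv_le_0_compat; lra|].
      apply Rmult_le_reg_r with d; auto. unfold Rdiv. rewrite Rmult_assoc, Rinv_l; lra. }
    pose proof (Cf b x mu ltac:(unfold b; lra) Hx Hmu) as C.
    replace (mu * b + (1 - mu) * x) with y in C by (unfold mu, b; field; lra).
    assert (E : d * (mu * f b + (1 - mu) * f x - f x) = (y - x) * (f b - f x))
      by (unfold mu; field; lra).
    apply Rmult_le_compat_l with (r := d) in C; lra. }
  assert (I2 : d * (f x - f y) <= (y - x) * (f a - f x)).
  { set (nu := (y - x) / (y - a)).
    assert (Hya : 0 < y - a) by (unfold a; lra).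
    assert (Hnu : 0 <= nu <= 1).
    { unfold nu. split; [apply Rdiv_le_0_compat; lra|].
      apply Rmult_le_reg_r with (y - a); auto. unfold Rdiv. rewrite Rmult_assoc, Rinv_l; unfold a in *; lra. }
    assert (Hyr : l < y < r) by lra.
    pose proof (Cf a y nu ltac:(unfold a; lra) Hyr Hnu) as C.
    replace (nu * a + (1 - nu) * y) with x in C by (unfold nu, a in *; field; lra).
    apply Rmult_le_compat_l with (r := y - a) in C; [|lra].
    assert (E : (y - a) * (nu * f a + (1 - nu) * f y) = (y - x) * f a + d * f y)
      by (unfold nu, a in *; field; lra).
    replace (y - a) with ((y - x) + d) in C at 1 by (unfold a; ring).
    rewrite E in C. lra. }
  assert (Ha' : f a - f x <= Rabs (f a - f x)) by apply Rle_abs.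
  assert (Ha'' : - Rabs (f a - f x) <= f a - f x) by apply neg_abs.
  assert (Hb' : f b - f x <= Rabs (f b - f x)) by apply Rle_abs.
  assert (Hb'' : - Rabs (f b - f x) <= f b - f x) by apply neg_abs.
  assert (B : d * Rabs (f y - f x) <= (y - x) * K).
  { assert (P1 : (y - x) * (f a - f x) <= (y - x) * Rabs (f a - f x)) by (apply Rmult_le_compat_l; lra).
    assert (P2 : (y - x) * (f b - f x) <= (y - x) * Rabs (f b - f x)) by (apply Rmult_le_compat_l; lra).
    assert (P3 : 0 <= (y - x) * Rabs (f a - f x)) by (apply Rmult_le_pos; [lra|apply Rabs_pos]).
    assert (P4 : 0 <= (y - x) * Rabs (f b - f x)) by (apply Rmult_le_pos; [lra|apply Rabs_pos]).
    unfold K. rewrite Rmult_plus_distr_l.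
    destruct (Rcase_abs (f y - f x)) as [h|h].
    - rewrite Rabs_left; auto. lra.
    - rewrite Rabs_right; auto. lra. }
  assert (B2 : (y - x) * K <= eps * d / (K + 1) * K) by (apply Rmult_le_compat_r; lra).
  assert (B3 : eps * d / (K + 1) * K < eps * d).
  { apply Rmult_lt_reg_r with (K + 1); [lra|].
    replace (eps * d / (K + 1) * K * (K + 1)) with (eps * d * K) by (field; lra). nra. }
  apply Rmult_lt_reg_l with d; auto. lra.
Qed.

Lemma convex_refl f l r : convex_on f l r -> convex_on (fun t => f (- t)) (- r) (- l).
Proof.
  intros Cf a b mu Ha Hb Hmu. 
  replace (- (mu * a + (1 - mu) * b)) with (mu * (- a) + (1 - mu) * (- b)) by ring.
  apply Cf; auto; lra.
Qed.

Lemma convex_cont f l r x : convex_on f l r -> l < x < r -> continuity_pt f x.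
Proof.
  intros Cf Hx. intros eps He.
  destruct (convex_right f l r x Cf Hx eps He) as [d1 [Hd1 R1]].
  destruct (convex_right (fun t => f (- t)) (- r) (- l) (- x) (convex_refl f l r Cf)
     ltac:(lra) eps He) as [d2 [Hd2 R2]].
  exists (Rmin d1 d2). split; [apply Rmin_glb_lt; auto|].
  intros y [_ Hy]. simpl in Hy. unfold Rdist in Hy |- *. unfold R_dist in *.
  pose proof (Rmin_l d1 d2). pose proof (Rmin_r d1 d2).
  destruct (Rle_dec x y).
  - apply R1. rewrite Rabs_right in Hy; lra.
  - specialize (R2 (- y)). rewrite !Ropp_involutive in R2. apply R2.
    rewrite Rabs_left in Hy; lra.
Qed.

Lemma T_low0 s : 0 < s < 1 -> 2 / sqrt (2 * s) <= T s.
Proof.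
  intros Hs. unfold T, H.
  replace (2 / sqrt (2 * s)) with (RInt (fun _ => 2 / sqrt (2 * s)) 0 1).
  2:{ rewrite (@RInt_const R_CompleteNormedModule). unfold scal; simpl; unfold mult; simpl. ring. }
  apply RInt_le; [lra| |apply hl_exRInt; lra|].
  - apply ex_RInt_const.
  - intros z Hz. unfold hl. pose proof (W_pos s z Hs) as HW.
    unfold Rdiv. apply Rmult_le_compat_l; [lra|].
    rewrite <- (Rmult_1_l (/ sqrt (2 * s))), <- (Rmult_1_l (/ sqrt (2 * 1 * W s z))).
    apply isqrt_decr; [nra|].
    assert (W s z <= s).
    { unfold W. assert (Hx : 0 <= 1 - z ^ 2 <= 1) by (simpl; nra).
      pose proof (al_le1 _ Hx). pose proof (be_pos _ Hx). nra. }
    lra.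
Qed.

Lemma T_lim0 M : exists e, 0 < e < 1 /\ forall s, 0 < s <= e -> M < T s.
Proof.
  set (e := 1 / (4 * (M ^ 2 + 1))).
  assert (HM : 0 <= M ^ 2) by (apply pow2_ge_0).
  assert (He : 0 < e < 1 / 2).
  { unfold e. split; [apply Rdiv_lt_0_compat; lra|].
    apply Rmult_lt_reg_r with (4 * (M ^ 2 + 1)); [lra|].
    replace (1 / (4 * (M ^ 2 + 1)) * (4 * (M ^ 2 + 1))) with 1 by (field; lra). lra. }
  exists e. split; [lra|]. intros s Hs.
  pose proof (T_low0 s ltac:(lra)) as L.
  assert (Hq : 0 < sqrt (2 * s)) by (apply sqrt_lt_R0; lra).
  assert (Hq2 : sqrt (2 * s) * sqrt (2 * s) = 2 * s) by (apply sqrt_sqrt; lra).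
  assert (2 * s * (M ^ 2 + 1) <= 1).
  { assert (2 * e * (M ^ 2 + 1) = 1 / 2) by (unfold e; field; lra).
    assert (2 * s * (M ^ 2 + 1) <= 2 * e * (M ^ 2 + 1)) by (apply Rmult_le_compat_r; lra). lra. }
  assert (sqrt (2 * s) * M < 2).
  { destruct (Rle_dec M 0). nra.
    assert ((sqrt (2 * s) * M) ^ 2 < 4).
    { replace ((sqrt (2 * s) * M) ^ 2) with (sqrt (2 * s) * sqrt (2 * s) * M ^ 2) by ring.
      rewrite Hq2. nra. }
    nra. }
  assert (M < 2 / sqrt (2 * s)).
  { apply Rmult_lt_reg_r with (sqrt (2 * s)); auto. field_simplify; lra. }
  lra.
Qed.

Lemma W_up1 s z : 0 < s < 1 -> 0 <= z <= 1 -> W s z <= z ^ 2 / 2 + (1 - s).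
Proof.
  intros Hs Hz. unfold W, al, be.
  set (x := 1 - z ^ 2).
  assert (Hx : 0 <= x <= 1) by (unfold x; simpl; nra).
  assert (Q1 : (1 + x + x ^ 2) / 3 - (1 + x) * (1 + x ^ 2) / 4 = z ^ 2 * (3 * x ^ 2 + 2 * x + 1) / 12)
    by (unfold x; field).
  assert (Q2 : z ^ 2 * (3 * x ^ 2 + 2 * x + 1) / 12 <= z ^ 2 / 2).
  { assert (0 <= z ^ 2) by apply pow2_ge_0.
    assert (3 * x ^ 2 + 2 * x + 1 <= 6) by nra. 
    assert (z ^ 2 * (3 * x ^ 2 + 2 * x + 1) <= z ^ 2 * 6) by (apply Rmult_le_compat_l; lra).
    lra. }
  assert (B1 : (1 + x) * (1 + x ^ 2) / 4 <= 1) by nra.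
  assert (B0 : 0 <= (1 + x) * (1 + x ^ 2) / 4) by nra.
  assert (A0 : 0 <= (1 + x + x ^ 2) / 3 - s * ((1 + x) * (1 + x ^ 2) / 4)).
  { assert (s * ((1 + x) * (1 + x ^ 2) / 4) <= (1 + x) * (1 + x ^ 2) / 4)
      by (rewrite <- (Rmult_1_l ((1 + x) * (1 + x ^ 2) / 4)) at 2; apply Rmult_le_compat_r; lra).
    assert (0 <= z ^ 2 * (3 * x ^ 2 + 2 * x + 1) / 12).
    { apply Rmult_le_pos; [apply Rmult_le_pos; [apply pow2_ge_0|nra]|lra]. }
    lra. }
  replace (s * ((1 + x + x ^ 2) / 3) - s ^ 2 * ((1 + x) * (1 + x ^ 2) / 4))
    with (s * ((1 + x + x ^ 2) / 3 - s * ((1 + x) * (1 + x ^ 2) / 4))) by ring.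
  assert (s * ((1 + x + x ^ 2) / 3 - s * ((1 + x) * (1 + x ^ 2) / 4)) <=
          1 * ((1 + x + x ^ 2) / 3 - s * ((1 + x) * (1 + x ^ 2) / 4)))
    by (apply Rmult_le_compat_r; lra).
  assert ((1 + x + x ^ 2) / 3 - s * ((1 + x) * (1 + x ^ 2) / 4) =
          z ^ 2 * (3 * x ^ 2 + 2 * x + 1) / 12 + (1 - s) * ((1 + x) * (1 + x ^ 2) / 4)) by lra.
  assert ((1 - s) * ((1 + x) * (1 + x ^ 2) / 4) <= (1 - s) * 1) by (apply Rmult_le_compat_l; lra).
  lra.
Qed.

Lemma RInt_log dd : 0 < dd -> RInt (fun z => 2 / (z + dd)) 0 1 = 2 * ln (1 + dd) - 2 * ln dd.
Proof.
  intros Hd.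
  apply is_RInt_unique.
  replace (2 * ln (1 + dd) - 2 * ln dd) with ((fun z => 2 * ln (z + dd)) 1 - (fun z => 2 * ln (z + dd)) 0)
    by (simpl; rewrite Rplus_0_l; ring).
  apply (is_RInt_derive (fun z => 2 * ln (z + dd)) (fun z => 2 / (z + dd))).
  - intros z Hz. rewrite Rmin_left in Hz by lra. rewrite Rmax_right in Hz by lra.
    auto_derive; [lra|]. field. lra.
  - intros z Hz. rewrite Rmin_left in Hz by lra. rewrite Rmax_right in Hz by lra.
    apply (ex_derive_continuous (fun z => 2 / (z + dd))). auto_derive. lra.
Qed.

Lemma T_low1 s : 0 < s < 1 -> - 2 * ln (sqrt (2 * (1 - s))) <= T s.
Proof.
  intros Hs. set (dd := sqrt (2 * (1 - s))).
  assert (Hd : 0 < dd) by (apply sqrt_lt_R0; lra).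
  assert (Hd2 : dd * dd = 2 * (1 - s)) by (apply sqrt_sqrt; lra).
  assert (L : 0 <= ln (1 + dd)).
  { rewrite <- ln_1. apply Rlt_le, ln_increasing; lra. }
  apply Rle_trans with (RInt (fun z => 2 / (z + dd)) 0 1).
  { rewrite RInt_log; auto. lra. }
  unfold T, H. apply RInt_le; [lra| | apply hl_exRInt; lra |].
  - exists (2 * ln (1 + dd) - 2 * ln dd). rewrite <- RInt_log; auto.
    apply (@RInt_correct R_CompleteNormedModule).
    apply (@ex_RInt_continuous R_CompleteNormedModule). intros z Hz.
    rewrite Rmin_left in Hz by lra. rewrite Rmax_right in Hz by lra.
    apply (ex_derive_continuous (fun z => 2 / (z + dd))). auto_derive. lra.
  - intros z Hz. unfold hl. pose proof (W_pos s z Hs) as HW.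
    pose proof (W_up1 s z Hs ltac:(lra)) as Wu.
    unfold Rdiv. apply Rmult_le_compat_l; [lra|].
    assert (Hq : 0 < sqrt (2 * 1 * W s z)) by (apply sqrt_lt_R0; nra).
    assert (sqrt (2 * 1 * W s z) <= z + dd).
    { apply Rsqr_incr_0_var; [|lra]. unfold Rsqr. rewrite sqrt_sqrt; [|nra].
      nra. }
    apply Rinv_le_contravar; auto.
Qed.

Lemma T_lim1 M : exists e, 0 < e < 1 /\ forall s, 1 - e <= s < 1 -> M < T s.
Proof.
  set (q := exp (- M / 2)).
  assert (Hq : 0 < q) by apply exp_pos.
  set (e := Rmin (1 / 2) (q ^ 2 / 4)).
  assert (He : 0 < e <= 1 / 2).
  { unfold e. split; [apply Rmin_glb_lt; [lra|]; nra|apply Rmin_l]. }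
  assert (He2 : e <= q ^ 2 / 4) by apply Rmin_r.
  exists e. split; [lra|]. intros s Hs.
  pose proof (T_low1 s ltac:(lra)) as L.
  set (dd := sqrt (2 * (1 - s))) in L.
  assert (Hd : 0 < dd) by (apply sqrt_lt_R0; lra).
  assert (Hd2 : dd * dd = 2 * (1 - s)) by (apply sqrt_sqrt; lra).
  assert (dd < q) by nra.
  assert (ln dd < - M / 2).
  { replace (- M / 2) with (ln q) by (unfold q; apply ln_exp). apply ln_increasing; auto. }
  lra.
Qed.

Lemma T_conv : convex_on T 0 1.
Proof. intros a b mu Ha Hb Hm. apply T_convex; auto. Qed.

Lemma T_cont x : 0 < x < 1 -> continuity_pt T x.
Proof. intros Hx. apply (convex_cont T 0 1 x T_conv Hx). Qed.

Lemma T_min : exists ss, 0 < ss < 1 /\ forall x, 0 < x < 1 -> x <> ss -> T ss < T x.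
Proof.
  set (M := T (1 / 2)).
  destruct (T_lim0 M) as [e0 [He0 L0]].
  destruct (T_lim1 M) as [e1 [He1 L1]].
  assert (e0 < 1 / 2).
  { destruct (Rlt_dec e0 (1 / 2)); auto. specialize (L0 (1 / 2) ltac:(lra)). unfold M in L0. lra. }
  assert (1 - e1 > 1 / 2).
  { destruct (Rlt_dec (1 / 2) (1 - e1)); auto. specialize (L1 (1 / 2) ltac:(lra)). unfold M in L1. lra. }
  destruct (continuity_ab_min T e0 (1 - e1)) as [mx [Hmx Hr]].
  - lra.
  - intros c Hc. apply T_cont. lra.
  - assert (Hle : forall x, 0 < x < 1 -> T mx <= T x).
    { intros x Hx. destruct (Rle_dec x e0) as [h|h].
      - specialize (L0 x ltac:(lra)). specialize (Hmx (1 / 2) ltac:(lra)). fold M in Hmx. lra.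
      - destruct (Rle_dec (1 - e1) x) as [h'|h'].
        + specialize (L1 x ltac:(lra)). specialize (Hmx (1 / 2) ltac:(lra)). fold M in Hmx. lra.
        + apply Hmx. lra. }
    exists mx. split; [lra|]. intros x Hx Hne.
    pose proof (T_sconvex x mx (1 / 2) Hx ltac:(lra) Hne ltac:(lra)) as S.
    assert (Hmid : 0 < 1 / 2 * x + (1 - 1 / 2) * mx < 1) by lra.
    pose proof (Hle _ Hmid). lra.
Qed.

Lemma T_dec ss x y : 0 < ss < 1 -> (forall x, 0 < x < 1 -> x <> ss -> T ss < T x) ->
  0 < x -> x < y -> y <= ss -> T y < T x.
Proof.
  intros Hss Hmin Hx Hxy Hy.
  assert (Tx : T ss < T x) by (apply Hmin; lra).
  destruct (Req_dec y ss) as [e|e]. { rewrite e. auto. }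
  set (mu := (ss - y) / (ss - x)).
  assert (Hmu : 0 < mu < 1).
  { unfold mu. split. apply Rdiv_lt_0_compat; lra.
    apply Rmult_lt_reg_r with (ss - x); [lra|]. unfold Rdiv. rewrite Rmult_assoc, Rinv_l; lra. }
  pose proof (T_sconvex x ss mu ltac:(lra) Hss ltac:(lra) Hmu) as S.
  replace (mu * x + (1 - mu) * ss) with y in S by (unfold mu; field; lra).
  assert (mu * T x + (1 - mu) * T ss <= mu * T x + (1 - mu) * T x).
  { apply Rplus_le_compat_l. apply Rmult_le_compat_l; lra. }
  lra.
Qed.

Lemma T_inc ss x y : 0 < ss < 1 -> (forall x, 0 < x < 1 -> x <> ss -> T ss < T x) ->
  ss <= x -> x < y -> y < 1 -> T x < T y.
Proof.
  intros Hss Hmin Hx Hxy Hy.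
  assert (Ty : T ss < T y) by (apply Hmin; lra).
  destruct (Req_dec x ss) as [e|e]. { rewrite e. auto. }
  set (mu := (x - ss) / (y - ss)).
  assert (Hmu : 0 < mu < 1).
  { unfold mu. split. apply Rdiv_lt_0_compat; lra.
    apply Rmult_lt_reg_r with (y - ss); [lra|]. unfold Rdiv. rewrite Rmult_assoc, Rinv_l; lra. }
  pose proof (T_sconvex y ss mu ltac:(lra) Hss ltac:(lra) Hmu) as S.
  replace (mu * y + (1 - mu) * ss) with x in S by (unfold mu; field; lra).
  assert (mu * T y + (1 - mu) * T ss <= mu * T y + (1 - mu) * T y).
  { apply Rplus_le_compat_l. apply Rmult_le_compat_l; lra. }
  lra.
Qed.

Theorem proposition2p1 (sigma : R) (Hsigma : 0 < sigma < 1 / 2) :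
  exists lamstar sstar : R,
    0 < lamstar /\ 0 < sstar < 1 /\
    (forall lam, 0 < lam < lamstar ->
       forall s, I0 sigma lam s <-> 0 < s < 1) /\
    (forall s, I0 sigma lamstar s <-> (0 < s < 1 /\ s <> sstar)) /\
    (forall lam, lamstar < lam ->
       exists s0 s1, 0 < s0 < 1 /\ 0 < s1 < 1 /\ s0 < sstar < s1 /\
         forall s, I0 sigma lam s <-> (0 < s < s0 \/ s1 < s < 1)).
Proof.
  destruct T_min as [ss [Hss Hmin]].
  set (m := T ss).
  assert (Hm : 0 < m).
  { pose proof (T_low0 ss Hss). unfold m.
    assert (0 < 2 / sqrt (2 * ss)) by (apply Rdiv_lt_0_compat; [lra|apply sqrt_lt_R0; lra]). lra. }
  set (ls := (m / sigma) ^ 2).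
  assert (Hms : 0 < m / sigma) by (apply Rdiv_lt_0_compat; lra).
  assert (Hls : 0 < ls) by (unfold ls; apply pow_lt; auto).
  assert (Sls : sqrt ls = m / sigma) by (unfold ls; apply sqrt_pow2; lra).
  assert (Tge : forall s, 0 < s < 1 -> m <= T s).
  { intros s Hs. destruct (Req_dec s ss) as [e|e]. rewrite e; unfold m; lra.
    apply Rlt_le, Hmin; auto. }
  exists ls, ss. split; [auto|]. split; [auto|]. split; [|split].
  - intros lam Hlam s. rewrite I0_iff by lra.
    assert (H1 : sqrt lam < sqrt ls) by (apply sqrt_lt_1_alt; lra).
    rewrite Sls in H1.
    assert (sigma * sqrt lam < m).
    { apply Rmult_lt_compat_l with (r := sigma) in H1; [|lra].
      replace (sigma * (m / sigma)) with m in H1 by (field; lra). lra. }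
    split; [tauto|]. intros Hs. split; auto. pose proof (Tge s Hs). lra.
  - intros s. rewrite I0_iff by lra. rewrite Sls.
    replace (sigma * (m / sigma)) with m by (field; lra).
    split.
    + intros [Hs Hlt]. split; auto. intro e. rewrite e in Hlt. unfold m in Hlt. lra.
    + intros [Hs Hne]. split; [exact Hs|]. eapply Hmin; eassumption.
  - intros lam Hlam.
    set (c := sigma * sqrt lam).
    assert (Hc : m < c).
    { assert (H1 : sqrt ls < sqrt lam) by (apply sqrt_lt_1_alt; lra).
      rewrite Sls in H1. unfold c.
      apply Rmult_lt_compat_l with (r := sigma) in H1; [|lra].
      replace (sigma * (m / sigma)) with m in H1 by (field; lra). lra. }
    destruct (T_lim0 c) as [e0 [He0 L0]].
    destruct (T_lim1 c) as [e1 [He1 L1]].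
    set (a := Rmin e0 (ss / 2)).
    assert (Ha : 0 < a <= e0 /\ a < ss).
    { unfold a. pose proof (Rmin_l e0 (ss / 2)). pose proof (Rmin_r e0 (ss / 2)).
      split; [split; [apply Rmin_glb_lt; lra|lra]|lra]. }
    set (b := Rmax (1 - e1) ((1 + ss) / 2)).
    assert (Hb : 1 - e1 <= b < 1 /\ ss < b).
    { unfold b. pose proof (Rmax_l (1 - e1) ((1 + ss) / 2)). pose proof (Rmax_r (1 - e1) ((1 + ss) / 2)).
      split; [split; [lra|apply Rmax_lub_lt; lra]|lra]. }
    assert (Ta : c < T a) by (apply L0; lra).
    assert (Tb : c < T b) by (apply L1; lra).
    destruct (Ranalysis5.f_interv_is_interv (fun x => - T x) a ss (- c)) as [s0 [Hs0 E0]].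
    { lra. } { unfold m in Hc. lra. }
    { intros x Hx. apply continuity_pt_opp. apply T_cont. lra. }
    destruct (Ranalysis5.f_interv_is_interv T ss b c) as [s1 [Hs1 E1]].
    { lra. } { unfold m in Hc. lra. }
    { intros x Hx. apply T_cont. lra. }
    assert (E0' : T s0 = c) by lra.
    assert (s0 <> ss) by (intro e; rewrite e in E0'; unfold m in Hc; lra).
    assert (s1 <> ss) by (intro e; rewrite e in E1; unfold m in Hc; lra).
    exists s0, s1. split; [lra|]. split; [lra|]. split; [lra|].
    intros s. rewrite I0_iff by lra. fold c. split.
    + intros [Hs Hlt].
      destruct (Rlt_dec s s0) as [h|h]; [left; lra|].
      destruct (Rlt_dec s1 s) as [h'|h']; [right; lra|].
      exfalso. destruct (Rle_dec s ss) as [h2|h2].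
      * destruct (Req_dec s s0) as [e|e]; [rewrite e in Hlt; lra|].
        pose proof (T_dec ss s0 s Hss Hmin ltac:(lra) ltac:(lra) h2). lra.
      * destruct (Req_dec s s1) as [e|e]; [rewrite e in Hlt; lra|].
        pose proof (T_inc ss s s1 Hss Hmin ltac:(lra) ltac:(lra) ltac:(lra)). lra.
    + intros [Hs|Hs].
      * split; [lra|]. pose proof (T_dec ss s s0 Hss Hmin ltac:(lra) ltac:(lra) ltac:(lra)). lra.
      * split; [lra|]. pose proof (T_inc ss s1 s Hss Hmin ltac:(lra) ltac:(lra) ltac:(lra)). lra.
Qed.
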